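(* Let $\mathcal{Y}=\{y_1,\dots,y_{n+1}\}\subset\mathbb{R}^n$ be affinely independent and $y_0\in\mathbb{R}^n$. Then the matrix $G=\sum_{i=0}^{n+1}\ell_iy_iy_i^T$ has exactly $|\mathcal{I}_+|-1$ positive eigenvalues and exactly $|\mathcal{I}_-|-1$ negative eigenvalues (counted with multiplicity).
   Context: The barycentric coordinates of $y_0\in\mathbb{R}^n$ with respect to the affinely independent set $\mathcal{Y}$ are the unique reals $\ell_1,\dots,\ell_{n+1}$ with $\sum_{i=1}^{n+1}\ell_i=1$ and $\sum_{i=1}^{n+1}\ell_iy_i=y_0$; set $\ell_0=-1$. Define $\mathcal{I}_+=\{i\in\{0,1,\dots,n+1\}:\ell_i>0\}$ and $\mathcal{I}_-=\{i\in\{0,1,\dots,n+1\}:\ell_i<0\}$ (so $0\in\mathcal{I}_-$). *)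

(* Defs.v *)
From HB Require Import structures.
From mathcomp Require Import all_boot all_order all_algebra.
Set Implicit Arguments. Unset Strict Implicit. Unset Printing Implicit Defensive.
Import Order.TTheory GRing.Theory Num.Theory.
Local Open Scope ring_scope.

Definition affinely_independent (R : fieldType) (n m : nat)
  (y : 'I_m -> 'cV[R]_n) : Prop :=
  forall c : 'I_m -> R,
    \sum_(i < m) c i = 0 -> \sum_(i < m) c i *: y i = 0 -> forall i, c i = 0.

Definition barycentric (R : fieldType) (n m : nat)
  (y : 'I_m -> 'cV[R]_n) (y0 : 'cV[R]_n) (l : 'I_m -> R) : Prop :=
  \sum_(i < m) l i = 1 /\ \sum_(i < m) l i *: y i = y0.

Definition ext0 (T : Type) (m : nat) (x0 : T) (x : 'I_m -> T) (i : 'I_m.+1) : T :=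
  match unlift ord0 i with Some j => x j | None => x0 end.

(* G = sum_{i=0}^{n+1} l_i y_i y_i^T  with l_0 = -1. *)
Definition Gmat (R : comNzRingType) (n : nat) (y0 : 'cV[R]_n)
  (y : 'I_n.+1 -> 'cV[R]_n) (l : 'I_n.+1 -> R) : 'M[R]_n :=
  \sum_(i < n.+2) ext0 (-1) l i *: (ext0 y0 y i *m (ext0 y0 y i)^T).

(* s is the multiset of eigenvalues of A, counted with (algebraic)
   multiplicity: the characteristic polynomial of A splits as prod_(x in s) (X - x). *)
Definition eigen_multiset (R : comNzRingType) (n : nat) (A : 'M[R]_n) (s : seq R) : Prop :=
  char_poly A = \prod_(x <- s) ('X - x%:P).

(* Main.v *)
Require Import Defs.
From HB Require Import structures.
From mathcomp Require Import all_boot all_order all_algebra.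
From mathcomp Require Import ring lra zify.
From mathcomp Require Import complex.
Import Order.TTheory GRing.Theory Num.Theory Num.Def.
Set Implicit Arguments. Unset Strict Implicit. Unset Printing Implicit Defensive.
Local Open Scope ring_scope.

Lemma sum_delta (R : nmodType) m (G : 'I_m -> R) j : \sum_i (G i) *+ (i == j) = G j.
Proof. by rewrite (bigD1 j) //= eqxx big1 ?addr0 // => i /negbTE->. Qed.

Lemma ext0_0 T m (x0 : T) (x : 'I_m -> T) : ext0 x0 x ord0 = x0.
Proof. by rewrite /ext0 unlift_none. Qed.

Lemma ext0_lift T m (x0 : T) (x : 'I_m -> T) j : ext0 x0 x (lift ord0 j) = x j.
Proof. by rewrite /ext0 liftK. Qed.

Section RealPart.
Variable R : comNzRingType.
Variables (n : nat) (y : 'I_n.+1 -> 'cV[R]_n) (y0 : 'cV[R]_n) (l : 'I_n.+1 -> R).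

Definition Yr : 'M[R]_(n, n.+1) := \matrix_(a, i) y i a 0.
Definition Mr : 'M[R]_n.+1 := \matrix_(i, j) (l i *+ (i == j) - l i * l j).

Lemma G_eq : \sum_(i < n.+1) l i *: y i = y0 -> Gmat y0 y l = Yr *m Mr *m Yr^T.
Proof.
move=> hy0; apply/matrixP => a b.
rewrite /Gmat summxE big_ord_recl !ext0_0.
under eq_bigr do rewrite ext0_lift ext0_lift.
rewrite !mxE big_ord1 !mxE.
under eq_bigr do rewrite !mxE big_ord1 !mxE.
rewrite -hy0 !summxE.
have E1 : forall c, \sum_k (l k *: y k) c ord0 = \sum_k l k * y k c ord0.
  by move=> c; apply: eq_bigr => k _; rewrite mxE.
rewrite !E1.
have E2 : forall j, (Yr *m Mr) a j = y j a ord0 * l j - (\sum_i y i a ord0 * l i) * l j.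
  move=> j; rewrite !mxE.
  under eq_bigr do rewrite !mxE mulrBr mulrnAr.
  by rewrite sumrB sum_delta mulr_suml; congr (_ - _); apply: eq_bigr => i _; rewrite mulrA.
apply: esym; rewrite (eq_bigr (fun j => (y j a ord0 * l j - (\sum_i y i a ord0 * l i) * l j) * y j b ord0)); last by move=> j _; rewrite E2 !mxE.
under eq_bigr do rewrite mulrBl.
rewrite sumrB addrC mulN1r; congr (_ - _).
  apply: eq_bigr => j _; ring.
rewrite [RHS]mulr_sumr; apply: eq_bigr => j _.
rewrite -mulrA; congr (_ * _).
by apply: eq_bigr => i _; rewrite mulrC.
Qed.

Lemma onesM : \sum_i l i = 1 -> (const_mx 1 : 'rV[R]_n.+1) *m Mr = 0.
Proof.
move=> hl; apply/rowP => j; rewrite !mxE.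
under eq_bigr do rewrite !mxE mul1r.
by rewrite sumrB sum_delta -mulr_suml hl mul1r subrr.
Qed.

Lemma Mr_tr : Mr^T = Mr.
Proof. by apply/matrixP => i j; rewrite !mxE eq_sym [l j * _]mulrC; case: eqP => [->|]. Qed.

Lemma Mones : \sum_i l i = 1 -> Mr *m (const_mx 1 : 'cV[R]_n.+1) = 0.
Proof. by move=> hl; apply: trmx_inj; rewrite trmx_mul Mr_tr trmx_const onesM // trmx0. Qed.

End RealPart.

Lemma Yh_unit (R : fieldType) n (y : 'I_n.+1 -> 'cV[R]_n) :
  affinely_independent y -> col_mx (const_mx 1 : 'rV[R]_n.+1) (Yr y) \in unitmx.
Proof.
move=> hA; rewrite -unitmx_tr -row_free_unit; apply/inj_row_free => w.
rewrite tr_col_mx mul_mx_row => /eqP; rewrite row_mx_eq0 => /andP[/eqP h1 /eqP h2].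
have := hA (fun i => w 0 i).
have s0 : \sum_i w 0 i = 0.
  transitivity ((w *m (const_mx 1 : 'rV[R]_n.+1)^T) 0 ord0); last by rewrite h1 mxE.
  rewrite mxE; apply: eq_bigr => i _; rewrite !mxE mulr1 //.
have s1 : \sum_i w 0 i *: y i = 0.
  apply/matrixP => a b; rewrite ord1 summxE !mxE.
  transitivity ((w *m (Yr y)^T) 0 a); last by rewrite h2 mxE.
  rewrite mxE; apply: eq_bigr => i _; rewrite !mxE //.
move=> /(_ s0 s1) H; apply/rowP => i; rewrite H mxE //.
Qed.

Local Open Scope sesquilinear_scope.
Section Syl.
Variable C : numClosedFieldType.

Definition qform n (A : 'M[C]_n) (u : 'rV[C]_n) : C := (u *m A *m u ^t*) 0 0.

Lemma rV_neq0 m (c : 'rV[C]_m) : c != 0 -> exists i, c 0 i != 0.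
Proof.
move=> cn; apply/existsP; apply: contraNT cn => /existsPn H.
apply/eqP/rowP=> i; rewrite mxE; apply/eqP; move: (H i); by rewrite negbK.
Qed.

Lemma qform_diag n (d : 'rV[C]_n) (x : 'rV[C]_n) :
  qform (diag_mx d) x = \sum_j d 0 j * (x 0 j * (x 0 j)^*).
Proof.
rewrite /qform mul_mx_diag !mxE; apply: eq_bigr => j _; rewrite !mxE.
by rewrite mulrCA mulrA.
Qed.

Lemma sylvester n (P : 'M[C]_n) (d : 'rV[C]_n) (S : {set 'I_n}) (Q : pred C)
   r (V : 'M[C]_(r, n)) :
  P \is unitarymx ->
  (forall x : 'rV_n, x != 0 -> (forall j, j \notin S -> x 0 j = 0) ->
     Q (\sum_j d 0 j * (x 0 j * (x 0 j)^*))) ->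
  (forall c : 'rV_r, c != 0 -> (c *m V != 0) &&
     ~~ Q (qform (P^t* *m diag_mx d *m P) (c *m V))) ->
  (r + #|S| <= n)%N.
Proof.
move=> Pu HS HV.
pose f := @enum_val _ (pred_of_set S).
pose E : 'M[C]_(#|S|, n) := \matrix_(i, j) ((f i == j)%:R).
have Eent : forall (c : 'rV[C]_#|S|) i, (c *m E) 0 (f i) = c 0 i.
  move=> c i; rewrite !mxE (bigD1 i) //= big1 ?addr0; last first.
    move=> k ki; rewrite mxE; case: eqP => [/enum_val_inj/eqP|]; first by rewrite (negbTE ki).
    by rewrite mulr0.
  by rewrite mxE eqxx mulr1.
have Eout : forall (c : 'rV[C]_#|S|) j, j \notin S -> (c *m E) 0 j = 0.
  move=> c j jS; rewrite !mxE big1 // => k _; rewrite mxE.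
  case: eqP => [fk|]; last by rewrite mulr0.
  by move: jS; rewrite -fk enum_valP.
have rV : \rank V = r.
  apply/eqP; rewrite -[_ == _]/(row_free V); apply/inj_row_free => c cV.
  apply/eqP; apply: contraT => cn; by move: (HV c cn); rewrite cV eqxx.
have Pun : P \in unitmx by apply: unitarymx_unit.
have rW : \rank (E *m P) = #|S|.
  rewrite mxrankMfree; last by rewrite row_free_unit.
  apply/eqP; rewrite -[_ == _]/(row_free E); apply/inj_row_free => c cE.
  apply/rowP => i; rewrite -Eent cE !mxE //.
have cap0 : (V :&: E *m P = 0)%MS.
  apply/eqP; rewrite -submx0; apply/row_subP => i.
  have : (row i (V :&: E *m P) <= V :&: E *m P)%MS by apply: row_sub.
  rewrite sub_capmx => /andP[/submxP[c ->] /submxP[c' cc']].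
  rewrite submx0; apply: contraT => cVn.
  have cn : c != 0 by apply: contraNneq cVn => ->; rewrite mul0mx.
  move: (HV c cn) => /andP[_]; apply: contraNT => _.
  rewrite cc'.
  have -> : qform (P^t* *m diag_mx d *m P) (c' *m (E *m P)) = qform (diag_mx d) (c' *m E).
    rewrite /qform !trmx_mul !map_mxM !mulmxA.
    by rewrite !(mulmxtVK _ Pu).
  rewrite qform_diag; apply: HS; last by move=> j jS; exact: Eout.
  by apply: contraNneq cVn; rewrite cc' mulmxA => ->; rewrite mul0mx.
have := mxrank_sum_cap V (E *m P); rewrite cap0 mxrank0 addn0 rV rW => <-.
exact: rank_leq_col.
Qed.

End Syl.

Definition Emx (K : pzRingType) m (B : {set 'I_m}) : 'M[K]_(#|B|, m) :=
  \matrix_(i, j) ((@enum_val _ (pred_of_set B) i == j)%:R).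

Lemma Emx_val (K : pzRingType) m (B : {set 'I_m}) (c : 'rV[K]_#|B|) i :
  (c *m Emx K B) 0 (enum_val i) = c 0 i.
Proof.
rewrite !mxE (bigD1 i) //= big1 ?addr0; last first.
  move=> k ki; rewrite mxE; case: eqP => [/enum_val_inj/eqP|]; first by rewrite (negbTE ki).
  by rewrite mulr0.
by rewrite mxE eqxx mulr1.
Qed.

Lemma Emx_out (K : pzRingType) m (B : {set 'I_m}) (c : 'rV[K]_#|B|) j :
  j \notin B -> (c *m Emx K B) 0 j = 0.
Proof.
move=> jS; rewrite !mxE big1 // => k _; rewrite mxE.
case: eqP => [fk|]; last by rewrite mulr0.
by move: jS; rewrite -fk enum_valP.
Qed.

Lemma qform0 (C : numClosedFieldType) n (A : 'M[C]_n) : qform A 0 = 0.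
Proof. by rewrite /qform !mul0mx mxE. Qed.

Section Cx.
Variable R : rcfType.
Local Notation C := (R[i]).
Local Notation f := (real_complex R).

Lemma f_real (x : R) : (f x : C) \is Num.real.
Proof. by rewrite complex_real. Qed.

Lemma f_conj (x : R) : (f x : C)^* = f x.
Proof. exact: conj_Creal (f_real x). Qed.

Lemma map_conj_f m k (A : 'M[R]_(m, k)) : map_mx conjC (map_mx f A) = map_mx f A.
Proof. by apply/matrixP => i j; rewrite !mxE f_conj. Qed.

Variables (n : nat) (y : 'I_n.+1 -> 'cV[R]_n) (y0 : 'cV[R]_n) (l : 'I_n.+1 -> R).
Hypothesis hA : affinely_independent y.
Hypothesis hB : barycentric y y0 l.

Definition Yc : 'M[C]_(n, n.+1) := map_mx f (Yr y).
Definition Mc : 'M[C]_n.+1 := map_mx f (Mr l).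
Definition GC : 'M[C]_n := map_mx f (Gmat y0 y l).
Definition onesC : 'rV[C]_n.+1 := const_mx 1.
Definition Yh : 'M[C]_n.+1 := col_mx onesC Yc.
Definition Yi : 'M[C]_(n.+1, 1 + n) := invmx Yh.
Definition xz (z : 'rV[C]_n.+1) : 'rV[C]_n := z *m rsubmx Yi.
Definition tz (z : 'rV[C]_n.+1) : 'rV[C]_1 := z *m lsubmx Yi.

Lemma GC_eq : GC = Yc *m Mc *m Yc^T.
Proof. by rewrite /GC (G_eq hB.2) !map_mxM map_trmx. Qed.

Lemma Yh_unitC : Yh \in unitmx.
Proof.
have -> : Yh = map_mx f (col_mx (const_mx 1 : 'rV[R]_n.+1) (Yr y)).
  by rewrite map_col_mx map_const_mx rmorph1.
by rewrite map_unitmx; apply: Yh_unit.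
Qed.

Lemma z_dec z : z = tz z *m onesC + xz z *m Yc.
Proof.
rewrite /tz /xz -mul_row_col -mul_mx_row hsubmxK /Yi -mulmxA mulVmx ?mulmx1 //.
exact: Yh_unitC.
Qed.

Lemma onesCE : onesC = map_mx f (const_mx 1 : 'rV[R]_n.+1).
Proof. by rewrite map_const_mx rmorph1. Qed.

Lemma onesMc : onesC *m Mc = 0.
Proof. by rewrite onesCE /Mc -map_mxM onesM ?map_mx0 // hB.1. Qed.

Lemma Mc_ones : Mc *m onesC^T = 0.
Proof.
have Mt : Mc^T = Mc by rewrite /Mc map_trmx Mr_tr.
by rewrite -[Mc]Mt -trmx_mul onesMc trmx0.
Qed.

Lemma K1 z : xz z *m GC = z *m Mc *m Yc^T.
Proof.
rewrite GC_eq !mulmxA; congr (_ *m _).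
have -> : xz z *m Yc = z - tz z *m onesC by rewrite {2}(z_dec z) addrC addKr.
by rewrite mulmxBl -mulmxA onesMc mulmx0 subr0.
Qed.

Lemma YcC (u : 'rV[C]_n) : (u *m Yc)^t* = Yc^T *m u^t*.
Proof. by rewrite trmx_mul map_mxM map_trmx /Yc map_conj_f. Qed.

Lemma xzYc z : xz z *m Yc = z - tz z *m onesC.
Proof. by rewrite {2}(z_dec z) addrC addKr. Qed.

Lemma K2 z : qform GC (xz z) = qform Mc z.
Proof.
rewrite /qform K1 -[z *m Mc *m Yc^T *m _]mulmxA -YcC xzYc.
rewrite linearB /= map_mxB mulmxDr mulmxN trmx_mul map_mxM.
have -> : map_mx conjC onesC^T = onesC^T.
  by rewrite onesCE -map_trmx map_conj_f.
by rewrite mulmxA -[z *m Mc *m onesC^T]mulmxA Mc_ones mulmx0 mul0mx subr0.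
Qed.

Definition lc j : C := f (l j).

Lemma qMc z : qform Mc z = \sum_j lc j * (z 0 j * (z 0 j)^*)
   - (\sum_j lc j * z 0 j) * (\sum_j lc j * z 0 j)^*.
Proof.
have E : forall k, (z *m Mc) 0 k = z 0 k * lc k - (\sum_j z 0 j * lc j) * lc k.
  move=> k; rewrite !mxE.
  under eq_bigr do rewrite !mxE rmorphB rmorphMn rmorphM /= mulrBr mulrnAr.
  rewrite sumrB sum_delta mulr_suml; congr (_ - _); apply: eq_bigr => j _.
  by rewrite mulrA.
rewrite /qform mxE.
under eq_bigr do rewrite E !mxE mulrBl.
rewrite sumrB; congr (_ - _).
  by apply: eq_bigr => j _; rewrite /lc; ring.
rewrite rmorph_sum mulr_sumr; apply: eq_bigr => j _.
rewrite rmorphM /= /lc f_conj -mulrA; congr (_ * _).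
by apply: eq_bigr => i _; rewrite mulrC.
Qed.

Lemma lc_gt0 j : 0 < l j -> 0 < lc j.
Proof. by move=> h; rewrite /lc -[0 : C]/(0%:C)%C ltcR. Qed.

Lemma lc_lt0 j : l j < 0 -> lc j < 0.
Proof. by move=> h; rewrite /lc -[0 : C]/(0%:C)%C ltcR. Qed.

Lemma lc_eq0 j : l j = 0 -> lc j = 0.
Proof. by move=> h; rewrite /lc h rmorph0. Qed.

Lemma exists_pos : exists a0, 0 < l a0.
Proof.
apply/existsP; apply: contraT => /existsPn H.
have : \sum_j l j <= 0 by apply: sumr_le0 => j _; rewrite leNgt; exact: H.
by rewrite hB.1 ler10.
Qed.

Lemma pos_family a0 : 0 < l a0 ->
  exists V : 'M[C]_(#|[set j | 0 < l j] :\ a0|, n),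
    forall c, c != 0 -> 0 < qform GC (c *m V).
Proof.
move=> ha0.
set B := [set j | 0 < l j] :\ a0.
pose E := Emx C B.
pose lcol : 'cV[C]_n.+1 := \col_j lc j.
pose ea : 'rV[C]_n.+1 := \row_j ((a0 == j)%:R).
pose Zp := lc a0 *: E - (E *m lcol) *m ea.
exists (Zp *m rsubmx Yi) => c cn.
rewrite mulmxA -/(xz _) K2 qMc.
set w := c *m E.
have zE : forall j, (c *m Zp) 0 j = lc a0 * w 0 j - (\sum_k w 0 k * lc k) * (a0 == j)%:R.
  move=> j; rewrite /Zp mulmxBr -scalemxAr !mulmxA !mxE big_ord1 !mxE.
  congr (_ - _ * _); apply: eq_bigr => k _; rewrite !mxE //.
have S0 : \sum_j lc j * (c *m Zp) 0 j = 0.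
  under eq_bigr do rewrite zE mulrBr mulr_natr mulrnAr eq_sym.
  rewrite sumrB sum_delta.
  rewrite (eq_bigr (fun j => lc a0 * (w 0 j * lc j))); last by move=> j _; ring.
  by rewrite -mulr_sumr subrr.
have a0B : a0 \in [set j | 0 < l j] by rewrite inE.
have Zout : forall j, j \notin [set j | 0 < l j] -> (c *m Zp) 0 j = 0.
  move=> j jn; rewrite zE /w Emx_out; last by move: jn; rewrite !inE => jn; rewrite negb_and jn orbT.
  have -> : (a0 == j) = false by apply/eqP => aj; move: jn; rewrite -aj a0B.
  by rewrite !mulr0 subrr.
have Zval : forall i, (c *m Zp) 0 (enum_val i) = lc a0 * c 0 i.
  move=> i; rewrite zE /w Emx_val.
  have : enum_val i \in B by apply: enum_valP.
  rewrite !inE => /andP[/negbTE h _]; by rewrite eq_sym h mulr0 subr0.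
rewrite S0 mul0r subr0.
have [i ci] := rV_neq0 cn.
have evB : 0 < l (enum_val i).
  have : enum_val i \in B by apply: enum_valP.
  by rewrite !inE => /andP[_].
rewrite (bigD1 (enum_val i)) //=.
apply: (@lt_le_trans _ _ (lc (enum_val i) * ((c *m Zp) 0 (enum_val i) * ((c *m Zp) 0 (enum_val i))^*))).
  rewrite mulr_gt0 ?lc_gt0 // mul_conjC_gt0 Zval mulf_neq0 //.
  by rewrite gt_eqF // lc_gt0.
rewrite lerDl; apply: sumr_ge0 => j _.
case: (boolP (j \in [set j | 0 < l j])) => jB.
  by move: jB; rewrite inE => jB; rewrite mulr_ge0 ?mul_conjC_ge0 // ltW // lc_gt0.
by rewrite Zout // mul0r mulr0.
Qed.

Lemma neg_family :
  exists V : 'M[C]_(#|[set j | l j < 0]|, n),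
    forall c, c != 0 -> qform GC (c *m V) < 0.
Proof.
set B := [set j | l j < 0].
pose E := Emx C B.
exists (E *m rsubmx Yi) => c cn.
rewrite mulmxA -/(xz _) K2 qMc.
set z := c *m E.
apply: (@le_lt_trans _ _ (\sum_j lc j * (z 0 j * (z 0 j)^*))).
  by rewrite lerBlDr lerDl mul_conjC_ge0.
have [i ci] := rV_neq0 cn.
have evB : l (enum_val i) < 0.
  have : enum_val i \in B by apply: enum_valP.
  by rewrite !inE.
rewrite (bigD1 (enum_val i)) //=.
apply: (@le_lt_trans _ _ (lc (enum_val i) * (z 0 (enum_val i) * (z 0 (enum_val i))^*))).
  rewrite gerDl; apply: sumr_le0 => j _.
  case: (boolP (j \in B)) => jB.
    by move: jB; rewrite inE => jB; rewrite mulr_le0_ge0 ?mul_conjC_ge0 // ltW // lc_lt0.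
  by rewrite /z Emx_out // mul0r mulr0.
by rewrite nmulr_rlt0 ?lc_lt0 // mul_conjC_gt0 /z Emx_val.
Qed.

Lemma ker_family a0 : 0 < l a0 ->
  exists V : 'M[C]_(#|[set j | l j == 0]|, n),
    forall c : 'rV[C]_#|[set j | l j == 0]|, c != 0 -> (c *m V != 0) && (c *m V *m GC == 0).
Proof.
move=> ha0.
set B := [set j | l j == 0].
pose E := Emx C B.
exists (E *m rsubmx Yi) => c cn.
rewrite mulmxA -/(xz _).
set z := c *m E.
have [i ci] := rV_neq0 cn.
apply/andP; split.
  apply: contra ci => /eqP x0.
  have zd := z_dec z; rewrite x0 mul0mx addr0 in zd.
  have a0B : a0 \notin B by rewrite inE gt_eqF.
  have za : z 0 a0 = 0 by rewrite /z Emx_out.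
  have zt : forall j, z 0 j = tz z 0 0.
    by move=> j; rewrite {1}zd !mxE big_ord1 !mxE mulr1.
  by rewrite -(Emx_val c) -/z zt -(zt a0) za.
rewrite K1; apply/eqP.
suff -> : z *m Mc = 0 by rewrite mul0mx.
apply/rowP => k; rewrite !mxE big1 // => j _.
case: (boolP (j \in B)) => jB.
  move: jB; rewrite inE => /eqP jB.
  by rewrite !mxE jB rmorphB rmorphMn rmorphM rmorph0 mul0rn mul0r subr0 mulr0.
by rewrite /z Emx_out // mul0r.
Qed.

Lemma GC_tr : GC^T = GC.
Proof.
have Mt : Mc^T = Mc by rewrite /Mc map_trmx Mr_tr.
by rewrite GC_eq !trmx_mul trmxK Mt mulmxA.
Qed.

Lemma GC_herm : GC \is hermsymmx.
Proof.
apply: realsym_hermsym.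
  apply/is_hermitianmxP; rewrite expr0 scale1r.
  by apply/matrixP => i j; move: (congr1 (fun M : 'M[C]_n => M j i) GC_tr); rewrite /GC !mxE => ->.
apply/mxOverP => i j; by rewrite /GC mxE f_real.
Qed.

End Cx.

Lemma char_poly_sim (F : fieldType) n (P D : 'M[F]_n) : P \in unitmx ->
  char_poly (invmx P *m D *m P) = char_poly D.
Proof.
move=> Pu.
have H : ('X%:M : 'M[{poly F}]_n) = map_mx polyC (invmx P) *m 'X%:M *m map_mx polyC P.
  by rewrite mul_mx_scalar -scalemxAl -map_mxM mulVmx // map_mx1 scalemx1.
rewrite /char_poly /char_poly_mx {1}H !map_mxM -mulmxBl -mulmxBr !det_mulmx.
rewrite mulrC mulrA -det_mulmx -map_mxM mulmxV // map_mx1 det1 mul1r //.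
Qed.

Lemma cardsE (T : finType) (P : pred T) : #|[set x | P x]| = (\sum_x (P x : nat))%N.
Proof. by rewrite -sum1dep_card big_mkcond /=; apply: eq_bigr => x _; case: (P x). Qed.

Lemma count_enum (T : finType) (P : pred T) : count P (enum T) = #|[set x | P x]|.
Proof.
have H : forall s, count P s = (\sum_(x <- s) (P x : nat))%N.
  by elim => [|x s IH]; rewrite ?big_nil ?big_cons //= IH.
by rewrite H cardsE enumT.
Qed.

Lemma card3 (R : realDomainType) m (g : 'I_m -> R) :
  addn (addn #|[set j | 0 < g j]| #|[set j | g j < 0]|) #|[set j | g j == 0]| = m.
Proof.
rewrite !cardsE -!big_split /= -[RHS]card_ord -sum1_card.
by apply: eq_bigr => j _; case: (ltrgtP (g j) 0).
Qed.

Lemma card_le0 (R : realDomainType) m (g : 'I_m -> R) :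
  #|[set j | g j <= 0]| = addn #|[set j | g j < 0]| #|[set j | g j == 0]|.
Proof.
rewrite !cardsE -!big_split /=.
by apply: eq_bigr => j _; case: (ltrgtP (g j) 0).
Qed.

Lemma card_ge0 (R : realDomainType) m (g : 'I_m -> R) :
  #|[set j | 0 <= g j]| = addn #|[set j | 0 < g j]| #|[set j | g j == 0]|.
Proof.
rewrite !cardsE -!big_split /=.
by apply: eq_bigr => j _; case: (ltrgtP (g j) 0).
Qed.

Lemma card_neq0 (R : realDomainType) m (g : 'I_m -> R) :
  #|[set j | g j != 0]| = addn #|[set j | 0 < g j]| #|[set j | g j < 0]|.
Proof.
rewrite !cardsE -!big_split /=.
by apply: eq_bigr => j _; case: (ltrgtP (g j) 0).
Qed.

Lemma card_ext_pos (R : numDomainType) n (l : 'I_n.+1 -> R) :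
  #|[set i : 'I_n.+2 | 0 < ext0 (-1) l i]| = #|[set j | 0 < l j]|.
Proof.
rewrite !cardsE big_ord_recl ext0_0.
have -> : (0 < -1 :> R) = false by rewrite ltr0N1.
by rewrite add0n; apply: eq_bigr => j _; rewrite ext0_lift.
Qed.

Lemma card_ext_neg (R : numDomainType) n (l : 'I_n.+1 -> R) :
  #|[set i : 'I_n.+2 | ext0 (-1) l i < 0]| = #|[set j | l j < 0]|.+1.
Proof.
rewrite !cardsE big_ord_recl ext0_0 ltrN10 add1n; congr _.+1.
by apply: eq_bigr => j _; rewrite ext0_lift.
Qed.

Unset Implicit Arguments.

Theorem lemma4p1 (R : rcfType) (n : nat) (y : 'I_n.+1 -> 'cV[R]_n) (y0 : 'cV[R]_n)
  (l : 'I_n.+1 -> R) :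
  affinely_independent y ->
  barycentric y y0 l ->
  exists s : seq R,
    eigen_multiset (Gmat y0 y l) s /\
    count (fun x => 0 < x) s = #|[set i : 'I_n.+2 | 0 < ext0 (-1) l i]|.-1 /\
    count (fun x => x < 0) s = #|[set i : 'I_n.+2 | ext0 (-1) l i < 0]|.-1.
Proof.
move=> hA hB.
have herm := GC_herm hB.
set G := GC y y0 l in herm *.
pose P := spectralmx G.
pose d := spectral_diag G.
have Pu : P \is unitarymx := spectral_unitarymx G.
have GE : G = P^t* *m diag_mx d *m P.
  rewrite -invmx_unitary //; exact/orthomx_spectralP/hermitian_normalmx.
have dreal : forall j, d 0 j \is Num.real.
  by move=> j; move/mxOverP: (hermitian_spectral_diag_real herm) => /(_ 0 j).
pose dr j := complex.Re (d 0 j).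
have dE : forall j, d 0 j = (dr j)%:C%C by move=> j; rewrite /dr RRe_real.
exists [seq dr j | j <- enum 'I_n].
rewrite !count_map -!enumT !count_enum card_ext_pos card_ext_neg /=.
split.
  apply: (map_poly_inj (real_complex R)).
  rewrite /eigen_multiset map_char_poly.
  have -> : map_mx (real_complex R) (Gmat y0 y l) = G by [].
  rewrite GE -invmx_unitary // char_poly_sim ?unitarymx_unit //.
  rewrite char_poly_trig ?diag_mx_is_trig // rmorph_prod big_map enumT.
  apply: eq_bigr => j _; rewrite mxE eqxx mulr1n rmorphB /= map_polyX map_polyC /= dE //.
have [a0 ha0] := exists_pos hB.
have lecR0 : forall x : R, ((x%:C)%C <= 0 :> R[i]) = (x <= 0).
  by move=> x; rewrite -[0 : R[i]]/(0%:C)%C lecR.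
have lec0R : forall x : R, (0 <= (x%:C)%C :> R[i]) = (0 <= x).
  by move=> x; rewrite -[0 : R[i]]/(0%:C)%C lecR.
have ltc0R : forall x : R, (0 < (x%:C)%C :> R[i]) = (0 < x).
  by move=> x; rewrite -[0 : R[i]]/(0%:C)%C ltcR.
have H1 : leq (addn #|[set j | 0 < l j] :\ a0| #|[set j | dr j <= 0]|) n.
  have [V HV] := pos_family hA hB ha0.
  apply: (sylvester (d := d) (V := V) (Q := fun x => x <= 0)) Pu _ _.
    move=> x _ xS; apply: sumr_le0 => j _.
    case: (boolP (j \in [set j | dr j <= 0])) => jS.
      by move: jS; rewrite inE => jS; rewrite mulr_le0_ge0 ?mul_conjC_ge0 // dE lecR0.
    by rewrite xS // mul0r mulr0.
  move=> c cn; have h := HV c cn; rewrite -GE; apply/andP; split.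
    by apply: contraTneq h => ->; rewrite qform0 ltxx.
  by rewrite (lt_geF h).
have qN : forall (A : 'M[R[i]]_n) u, qform (- A) u = - qform A u.
  by move=> A u; rewrite /qform mulmxN mulNmx mxE.
have GN : - G = P^t* *m diag_mx (- d) *m P.
  have -> : diag_mx (- d) = - diag_mx d by apply/matrixP => i j; rewrite !mxE mulNrn.
  by rewrite GE mulmxN mulNmx.
have H2 : leq (addn #|[set j | l j < 0]| #|[set j | 0 <= dr j]|) n.
  have [V HV] := neg_family hA hB.
  apply: (sylvester (d := - d) (V := V) (Q := fun x => x <= 0)) Pu _ _.
    move=> x _ xS; apply: sumr_le0 => j _.
    case: (boolP (j \in [set j | 0 <= dr j])) => jS.
      move: jS; rewrite inE => jS; rewrite mulr_le0_ge0 ?mul_conjC_ge0 //.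
      by rewrite mxE dE oppr_le0 lec0R.
    by rewrite xS // mul0r mulr0.
  move=> c cn; have h := HV c cn; rewrite -GN qN; apply/andP; split.
    by apply: contraTneq h => ->; rewrite qform0 ltxx.
  by rewrite oppr_le0 (lt_geF h).
pose d2 : 'rV[R[i]]_n := \row_j (d 0 j * d 0 j).
have GG : G *m G = P^t* *m diag_mx d2 *m P.
  rewrite GE !mulmxA (mulmxtVK _ Pu) -[P^t* *m diag_mx d *m diag_mx d]mulmxA.
  congr (_ *m _ *m _); apply/matrixP => i j; rewrite mul_diag_mx !mxE.
  by rewrite mulrnAr.
have H3 : leq (addn #|[set j | l j == 0]| #|[set j | dr j != 0]|) n.
  have [V HV] := ker_family hA hB ha0.
  apply: (sylvester (d := d2) (V := V) (Q := fun x => 0 < x)) Pu _ _.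
    move=> x xn xS.
    have [j0 xj0] := rV_neq0 xn.
    have j0S : dr j0 != 0.
      apply: contraNT xj0 => h; apply/eqP; apply: xS; by rewrite inE.
    rewrite (bigD1 j0) //=.
    apply: (@lt_le_trans _ _ (d2 0 j0 * (x 0 j0 * (x 0 j0)^*))).
      rewrite mulr_gt0 ?mul_conjC_gt0 // mxE !dE -rmorphM ltc0R.
      by rewrite lt0r mulf_neq0 //= -expr2 sqr_ge0.
    rewrite lerDl; apply: sumr_ge0 => j _.
    by rewrite mulr_ge0 ?mul_conjC_ge0 // mxE !dE -rmorphM lec0R -expr2 sqr_ge0.
  move=> c cn; have /andP[h1 /eqP h2] := HV c cn; rewrite -GG h1 /=.
  by rewrite /qform mulmxA h2 mul0mx mul0mx mxE ltxx.
have e1 := card3 dr.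
have e2 := card3 l.
have e3 := card_le0 dr.
have e4 := card_ge0 dr.
have e5 := card_neq0 dr.
have e6 := cardsD1 a0 [set j | 0 < l j].
have a0in : a0 \in [set j | 0 < l j] by rewrite inE.
rewrite a0in in e6.
move: H1 H2 H3 e1 e2 e3 e4 e5 e6.
set p := #|[set x | 0 < dr x]|.
set q := #|[set x | dr x < 0]|.
set z := #|[set x | dr x == 0]|.
set P1 := #|[set j | 0 < l j]|.
set N1 := #|[set j | l j < 0]|.
set Z1 := #|[set j | l j == 0]|.
move=> H1 H2 H3 e1 e2 e3 e4 e5 e6.
rewrite e3 in H1; rewrite e4 in H2; rewrite e5 in H3.
split; lia.
Qed.
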